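(* Let $\mathcal A\in\mathbb C^{n_1\times n_2\times n_3}$. Then $$\mathcal A\{-,*\}\,(\mathcal A^\dagger)^*\,\mathcal A\{-,*\}\subseteq\mathcal A\{-,*\},$$ i.e. for all $\mathcal U,\mathcal V\in\mathcal A\{-,*\}$ one has $\mathcal U(\mathcal A^\dagger)^*\mathcal V\in\mathcal A\{-,*\}$.
   Context: Fix a nonsingular matrix $M\in\mathbb C^{n_3\times n_3}$. For $\mathcal C\in\mathbb C^{n_1\times n_2\times n_3}$ let $\widehat{\mathcal C}=\mathcal C\times_3M$, i.e. $\widehat{\mathcal C}_{ijk}=\sum_{l=1}^{n_3}M_{kl}\mathcal C_{ijl}$, and let $\widehat{\mathcal C}^{(i)}$ denote its $i$-th frontal slice. The M-product $\mathcal C\star_M\mathcal D$ of $\mathcal C\in\mathbb C^{n_1\times n_2\times n_3}$ and $\mathcal D\in\mathbb C^{n_2\times l\times n_3}$ is the unique tensor with $\widehat{\mathcal C\star_M\mathcal D}^{(i)}=\widehat{\mathcal C}^{(i)}\widehat{\mathcal D}^{(i)}$ for all $i\in[n_3]$. Juxtaposition of tensors denotes the M-product. The conjugate transpose $\mathcal A^*$ is defined by $\widehat{\mathcal A^*}^{(i)}=(\widehat{\mathcal A}^{(i)})^*$. The Moore–Penrose inverse $\mathcal A^\dagger$ is the unique $\mathcal W$ satisfying $\mathcal A\mathcal W\mathcal A=\mathcal A$, $\mathcal W\mathcal A\mathcal W=\mathcal W$, $(\mathcal A\mathcal W)^*=\mathcal A\mathcal W$, $(\mathcal W\mathcal A)^*=\mathcal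 W\mathcal A$. $\mathcal A\{1\}$ is the set of all $\mathcal W$ with $\mathcal A\mathcal W\mathcal A=\mathcal A$. The set of 1-Star inverses is $\mathcal A\{-,*\}=\{\mathcal A^-\mathcal A\mathcal A^*:\mathcal A^-\in\mathcal A\{1\}\}$. *)

(* Defs.v *)
(* Complex scalars: any numClosedFieldType C (e.g. complex R). *)
From HB Require Import structures.
From mathcomp Require Import all_boot all_order all_algebra.
Set Implicit Arguments. Unset Strict Implicit. Unset Printing Implicit Defensive.
Import Order.TTheory GRing.Theory Num.Theory.
Local Open Scope ring_scope.

Section Tensors.
Variable C : numClosedFieldType.

(* A third-order tensor in C^{n1 x n2 x n3}, given by its n3 frontal slices. *)
Definition tensor (n1 n2 n3 : nat) := {ffun 'I_n3 -> 'M[C]_(n1, n2)}.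

Definition conjtr (m n : nat) (X : 'M[C]_(m, n)) : 'M[C]_(n, m) :=
  (map_mx Num.conj X)^T.

Definition mode3 (n1 n2 n3 : nat) (M : 'M[C]_n3) (T : tensor n1 n2 n3)
  : tensor n1 n2 n3 := [ffun k => \sum_l M k l *: T l].

Definition mprod (n1 n2 l n3 : nat) (M : 'M[C]_n3)
  (T : tensor n1 n2 n3) (S : tensor n2 l n3) : tensor n1 l n3 :=
  mode3 (invmx M) [ffun k => mode3 M T k *m mode3 M S k].

Definition mctr (n1 n2 n3 : nat) (M : 'M[C]_n3) (T : tensor n1 n2 n3)
  : tensor n2 n1 n3 :=
  mode3 (invmx M) [ffun k => conjtr (mode3 M T k)].

Definition is_MP (n1 n2 n3 : nat) (M : 'M[C]_n3)
  (A : tensor n1 n2 n3) (W : tensor n2 n1 n3) : Prop :=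
  [/\ mprod M (mprod M A W) A = A,
      mprod M (mprod M W A) W = W,
      mctr M (mprod M A W) = mprod M A W &
      mctr M (mprod M W A) = mprod M W A].

Definition inner_inv (n1 n2 n3 : nat) (M : 'M[C]_n3)
  (A : tensor n1 n2 n3) (W : tensor n2 n1 n3) : Prop :=
  mprod M (mprod M A W) A = A.

Definition one_star (n1 n2 n3 : nat) (M : 'M[C]_n3)
  (A : tensor n1 n2 n3) (U : tensor n2 n1 n3) : Prop :=
  exists Am : tensor n2 n1 n3,
    inner_inv M A Am /\ U = mprod M (mprod M Am A) (mctr M A).

End Tensors.

(* Main.v *)
Require Import Defs.
From mathcomp Require Import all_boot all_order all_algebra.
Import GRing.Theory Num.Theory.
Local Open Scope ring_scope.
Section S.
Variable C : numClosedFieldType.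
Lemma conjtrM m n p (X : 'M[C]_(m,n)) (Y : 'M[C]_(n,p)) : conjtr (X *m Y) = conjtr Y *m conjtr X.
Proof. by rewrite /conjtr map_mxM trmx_mul. Qed.
Lemma conjtrK m n (X : 'M[C]_(m,n)) : conjtr (conjtr X) = X.
Proof. by apply/matrixP=> i j; rewrite /conjtr !mxE conjCK. Qed.
Lemma mode3M n1 n2 n3 (M N : 'M[C]_n3) (T : tensor C n1 n2 n3) :
  mode3 M (mode3 N T) = mode3 (M *m N) T.
Proof.
apply/ffunP=> k; rewrite !ffunE.
under eq_bigr do rewrite ffunE scaler_sumr.
rewrite exchange_big /=; apply: eq_bigr => l _.
rewrite mxE scaler_suml; apply: eq_bigr => m _; by rewrite scalerA.
Qed.
Lemma mode31 n1 n2 n3 (T : tensor C n1 n2 n3) : mode3 1%:M T = T.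
Proof.
apply/ffunP=> k; rewrite ffunE (bigD1 k) //= big1 ?addr0.
  by rewrite mxE eqxx scale1r.
by move=> i ik; rewrite mxE eq_sym (negbTE ik) scale0r.
Qed.
Variables (n3 : nat) (M : 'M[C]_n3).
Hypothesis HM : M \in unitmx.
Lemma hatK n1 n2 (T : tensor C n1 n2 n3) : mode3 (invmx M) (mode3 M T) = T.
Proof. by rewrite mode3M mulVmx // mode31. Qed.
Lemma Khat n1 n2 (T : tensor C n1 n2 n3) : mode3 M (mode3 (invmx M) T) = T.
Proof. by rewrite mode3M mulmxV // mode31. Qed.
Lemma hat_inj n1 n2 (T S : tensor C n1 n2 n3) : (forall k, mode3 M T k = mode3 M S k) -> T = S.
Proof. by move=> h; rewrite -(@hatK _ _ T) -(@hatK _ _ S); congr mode3; apply/ffunP. Qed.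
Lemma hatP n1 n2 l (T : tensor C n1 n2 n3) (S : tensor C n2 l n3) k :
  mode3 M (mprod M T S) k = mode3 M T k *m mode3 M S k.
Proof. by rewrite /mprod Khat ffunE. Qed.
Lemma hatC n1 n2 (T : tensor C n1 n2 n3) k :
  mode3 M (mctr M T) k = conjtr (mode3 M T k).
Proof. by rewrite /mctr Khat ffunE. Qed.
End S.

Theorem theorem3p15 (C : numClosedFieldType) (n1 n2 n3 : nat)
  (M : 'M[C]_n3) (A : tensor C n1 n2 n3) (Adag : tensor C n2 n1 n3) :
  M \in unitmx -> is_MP M A Adag ->
  forall U V : tensor C n2 n1 n3,
    one_star M A U -> one_star M A V ->
    one_star M A (mprod M (mprod M U (mctr M Adag)) V).
Proof.
move=> HM [h1 _ _ h4] U V [X [hX ->]] [Y [hY ->]].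
exists (mprod M (mprod M X A) Y); rewrite /inner_inv in hX hY *; split.
  apply (@hat_inj _ _ _ HM); intro k.
  have e := congr1 (fun T => mode3 M T k) hX; move: e => /=.
  have f := congr1 (fun T => mode3 M T k) hY; move: f => /=.
  rewrite !hatP //.
  set a := mode3 M A k; set x := mode3 M X k; set y := mode3 M Y k.
  move=> ey ex.
  by rewrite !mulmxA ex ey.
apply (@hat_inj _ _ _ HM); intro k.
have e := congr1 (fun T => mode3 M T k) h1; move: e => /=.
have f := congr1 (fun T => mode3 M T k) h4; move: f => /=.
rewrite !hatP ?hatC ?hatP //.
set a := mode3 M A k; set w := mode3 M Adag k; set x := mode3 M X k; set y := mode3 M Y k.
move=> e4 e1.
have key : conjtr a *m conjtr w = w *m a by rewrite -conjtrM.
rewrite !mulmxA -(mulmxA _ (conjtr a) (conjtr w)) key !mulmxA -(mulmxA x a w) -(mulmxA x (a *m w) a) e1.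
done.
Qed.
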